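(* Suppose A1–A3 hold and let $\{x_k\}$ be generated by Algorithm 1. If $\nu_k\to0$ as $k\to\infty$, then either there exists $\bar k$ with $\nabla f(x_{\bar k})=0$, or $\liminf_{k\to\infty}\|\nabla f(x_k)\|=0$. (More precisely, $\lim_{T\to\infty}\min_{k=0,\dots,T-1}\|\nabla f(x_k)\|=0$.)
   Context: Let $(X,\langle\cdot,\cdot\rangle)$ be a real Hilbert space with induced norm $\|\cdot\|$, and $f:X\to\mathbb{R}$ Fréchet differentiable with gradient $\nabla f$. Algorithm 1 (general non-monotone descent algorithm): parameters $x_0\in X$, $\alpha_0>0$, $\beta,\rho\in(0,1)$. For $k=0,1,2,\dots$: choose $d_k\in X$ with $\langle\nabla f(x_k),d_k\rangle<0$; then for $l=0,1,2,\dots$ choose a number $\nu_{k,l}\ge 0$ and test $$f(x_k+\alpha_k\beta^l d_k)\le f(x_k)+\rho\alpha_k\beta^l\langle\nabla f(x_k),d_k\rangle+\nu_{k,l};$$ let $l_k$ be the first $l$ for which this holds, set $\nu_k:=\nu_{k,l_k}$, $x_{k+1}=x_k+\alpha_k\beta^{l_k}d_k$ and $\alpha_{k+1}=\alpha_k\beta^{l_k-1}$. It is assumed the algorithm generates infinite sequences (all $l_k$ finite). Assumptions: A1: $\nabla f$ is Lipschitz continuous with constant $L>0$. A2: there is $f_{low}\in\mathbb{R}$ with $f(x)\ge f_{low}$ for all $x\in X$. A3: there are constants $c_1,c_2>0$ with $\langle\nabla f(x_k),d_k\rangle\le -c_1\|\nabla f(x_k)\|^2$ and $\|d_k\|\le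 c_2\|\nabla f(x_k)\|$ for all $k$. *)

(* Defs.v *)
From Stdlib Require Import Reals Lra ZArith.
Open Scope R_scope.

Record HilbertSpace := {
  hcar :> Type;
  hadd : hcar -> hcar -> hcar;
  hscal : R -> hcar -> hcar;
  hzero : hcar;
  hopp : hcar -> hcar;
  inner : hcar -> hcar -> R;
  hadd_assoc : forall x y z, hadd x (hadd y z) = hadd (hadd x y) z;
  hadd_comm : forall x y, hadd x y = hadd y x;
  hadd_zero : forall x, hadd x hzero = x;
  hadd_opp : forall x, hadd x (hopp x) = hzero;
  hscal_assoc : forall a b x, hscal a (hscal b x) = hscal (a * b) x;
  hscal_one : forall x, hscal 1 x = x;
  hscal_distr_l : forall a x y, hscal a (hadd x y) = hadd (hscal a x) (hscal a y);
  hscal_distr_r : forall a b x, hscal (a + b) x = hadd (hscal a x) (hscal b x);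
  inner_sym : forall x y, inner x y = inner y x;
  inner_add_l : forall x y z, inner (hadd x y) z = inner x z + inner y z;
  inner_scal_l : forall a x y, inner (hscal a x) y = a * inner x y;
  inner_pos : forall x, 0 <= inner x x;
  inner_def : forall x, inner x x = 0 -> x = hzero;
  hcomplete : forall u : nat -> hcar,
    (forall eps, eps > 0 -> exists N, forall m n, (N <= m)%nat -> (N <= n)%nat ->
        sqrt (inner (hadd (u m) (hopp (u n))) (hadd (u m) (hopp (u n)))) < eps) ->
    exists l, forall eps, eps > 0 -> exists N, forall n, (N <= n)%nat ->
        sqrt (inner (hadd (u n) (hopp l)) (hadd (u n) (hopp l))) < eps
}.

Arguments hadd {h}.
Arguments hscal {h}.
Arguments hzero {h}.
Arguments hopp {h}.
Arguments inner {h}.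

Definition hnorm {X : HilbertSpace} (x : X) : R := sqrt (inner x x).
Definition hsub {X : HilbertSpace} (x y : X) : X := hadd x (hopp y).

Definition frechet_gradient {X : HilbertSpace} (f : X -> R) (g : X -> X) : Prop :=
  forall x : X, forall eps, eps > 0 -> exists delta, delta > 0 /\
    forall h : X, hnorm h < delta ->
      Rabs (f (hadd x h) - f x - inner (g x) h) <= eps * hnorm h.

Definition algorithm1 {X : HilbertSpace} (f : X -> R) (g : X -> X)
  (x0 : X) (alpha0 beta rho : R)
  (x d : nat -> X) (alpha : nat -> R) (l : nat -> nat) (nu : nat -> nat -> R) : Prop :=
  x 0%nat = x0 /\ alpha 0%nat = alpha0 /\
  (forall k, inner (g (x k)) (d k) < 0) /\
  (forall k j, 0 <= nu k j) /\
  (forall k,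
     f (hadd (x k) (hscal (alpha k * beta ^ l k) (d k)))
       <= f (x k) + rho * (alpha k * beta ^ l k) * inner (g (x k)) (d k) + nu k (l k)) /\
  (forall k j, (j < l k)%nat ->
     f (hadd (x k) (hscal (alpha k * beta ^ j) (d k)))
       > f (x k) + rho * (alpha k * beta ^ j) * inner (g (x k)) (d k) + nu k j) /\
  (forall k, x (S k) = hadd (x k) (hscal (alpha k * beta ^ l k) (d k))) /\
  (forall k, alpha (S k) = alpha k * powerRZ beta (Z.of_nat (l k) - 1)).

Fixpoint min_grad_norm {X : HilbertSpace} (g : X -> X) (x : nat -> X) (n : nat) : R :=
  match n with
  | O => hnorm (g (x 0%nat))
  | S m => Rmin (min_grad_norm g x m) (hnorm (g (x (S m))))
  end.

(* Main.v *)
Require Import Defs.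
From Stdlib Require Import Reals ZArith Lra Lia Classical.
Open Scope R_scope.

Lemma inner_zero_l (X : HilbertSpace) (y : X) : inner hzero y = 0.
Proof. pose proof (inner_add_l X hzero hzero y) as H. rewrite hadd_zero in H. lra. Qed.

Lemma inner_opp_l (X : HilbertSpace) (x y : X) : inner (hopp x) y = - inner x y.
Proof. pose proof (inner_add_l X x (hopp x) y) as H. rewrite hadd_opp, inner_zero_l in H. lra. Qed.

Lemma inner_add_r (X : HilbertSpace) (x y z : X) : inner x (hadd y z) = inner x y + inner x z.
Proof. rewrite inner_sym, inner_add_l, (inner_sym _ y), (inner_sym _ z). lra. Qed.

Lemma inner_scal_r (X : HilbertSpace) a (x y : X) : inner x (hscal a y) = a * inner x y.
Proof. rewrite inner_sym, inner_scal_l, (inner_sym _ y). lra. Qed.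

Lemma inner_opp_r (X : HilbertSpace) (x y : X) : inner x (hopp y) = - inner x y.
Proof. rewrite inner_sym, inner_opp_l, (inner_sym _ y). lra. Qed.

Lemma hnorm_nonneg (X : HilbertSpace) (x : X) : 0 <= hnorm x.
Proof. apply sqrt_pos. Qed.

Lemma hnorm_sq (X : HilbertSpace) (x : X) : hnorm x * hnorm x = inner x x.
Proof. unfold hnorm. apply sqrt_sqrt, inner_pos. Qed.

Lemma hscal_zero (X : HilbertSpace) (d : X) : hscal 0 d = hzero.
Proof. apply inner_def. rewrite inner_scal_l. lra. Qed.

Lemma hnorm_scal (X : HilbertSpace) a (v : X) : hnorm (hscal a v) = Rabs a * hnorm v.
Proof. unfold hnorm. rewrite inner_scal_l, inner_scal_r, <- Rmult_assoc.
  rewrite sqrt_mult. 2: nra. 2: apply inner_pos.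
  rewrite <- sqrt_Rsqr_abs. reflexivity. Qed.

Lemma cauchy_schwarz (X : HilbertSpace) (a b : X) : inner a b <= hnorm a * hnorm b.
Proof.
  destruct (Rle_dec (inner a b) 0) as [H|H].
  { pose proof (hnorm_nonneg X a); pose proof (hnorm_nonneg X b). nra. }
  assert (Q : forall t, 0 <= inner a a + 2 * t * inner a b + t * t * inner b b).
  { intro t. pose proof (inner_pos X (hadd a (hscal t b))) as P.
    rewrite !inner_add_l, !inner_add_r, !inner_scal_l, !inner_scal_r, (inner_sym _ b a) in P. lra. }
  assert (Hsq : inner a b * inner a b <= inner a a * inner b b).
  { pose proof (inner_pos X b) as Pb. destruct (Req_dec (inner b b) 0) as [E|E].
    - specialize (Q (- (inner a a + 1) / (2 * inner a b))).
      rewrite E in Q.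
      replace (2 * (- (inner a a + 1) / (2 * inner a b)) * inner a b) with (- (inner a a + 1)) in Q by (field; lra). lra.
    - specialize (Q (- inner a b / inner b b)).
      assert (0 < inner b b) by lra.
      assert (inner a a + 2 * (- inner a b / inner b b) * inner a b + (- inner a b / inner b b) * (- inner a b / inner b b) * inner b b
        = (inner a a * inner b b - inner a b * inner a b) / inner b b) by (field; lra).
      rewrite H1 in Q. apply Rmult_le_compat_r with (r := inner b b) in Q; [|lra].
      unfold Rdiv in Q. rewrite Rmult_assoc, Rinv_l in Q; lra. }
  unfold hnorm. rewrite <- sqrt_mult by apply inner_pos.
  rewrite <- (sqrt_square (inner a b)) by lra. apply sqrt_le_1_alt. lra.
Qed.

Lemma hadd_line (X : HilbertSpace) (x d : X) t h :
  hadd x (hscal (t + h) d) = hadd (hadd x (hscal t d)) (hscal h d).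
Proof. rewrite hscal_distr_r, hadd_assoc. reflexivity. Qed.

Lemma phi_deriv (X : HilbertSpace) (f : X -> R) g : frechet_gradient f g ->
  forall x d t, derivable_pt_lim (fun t => f (hadd x (hscal t d))) t (inner (g (hadd x (hscal t d))) d).
Proof.
  intros Hf x d t eps Heps.
  set (y := hadd x (hscal t d)).
  pose proof (hnorm_nonneg X d) as Hd.
  destruct (Hf y (eps / (2 * (hnorm d + 1)))) as [delta [Hdel H]].
  { apply Rdiv_lt_0_compat; lra. }
  assert (Hp : 0 < delta / (hnorm d + 1)) by (apply Rdiv_lt_0_compat; lra).
  exists (mkposreal _ Hp). intros h Hh0 Hh. simpl in Hh.
  specialize (H (hscal h d)).
  rewrite hnorm_scal in H.
  assert (Hlt : Rabs h * hnorm d < delta).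
  { apply Rlt_le_trans with (delta / (hnorm d + 1) * (hnorm d + 1)).
    - assert (0 < Rabs h) by (apply Rabs_pos_lt; auto). nra.
    - right; field; lra. }
  specialize (H Hlt). unfold y in H. rewrite <- hadd_line in H. fold y in H.
  rewrite inner_scal_r in H.
  assert (Ha : 0 < Rabs h) by (apply Rabs_pos_lt; auto).
  replace ((f (hadd x (hscal (t + h) d)) - f y) / h - inner (g y) d)
    with ((f (hadd x (hscal (t + h) d)) - f y - h * inner (g y) d) / h) by (field; auto).
  unfold Rdiv at 1. rewrite Rabs_mult, Rabs_inv.
  apply Rle_lt_trans with (eps / (2 * (hnorm d + 1)) * (Rabs h * hnorm d) * / Rabs h).
  { apply Rmult_le_compat_r. left; apply Rinv_0_lt_compat; auto. exact H. }
  replace (eps / (2 * (hnorm d + 1)) * (Rabs h * hnorm d) * / Rabs h)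
    with (eps * (hnorm d / (2 * (hnorm d + 1)))) by (field; lra).
  assert (hnorm d / (2 * (hnorm d + 1)) < 1).
  { apply (Rmult_lt_reg_r (2 * (hnorm d + 1))). lra. unfold Rdiv. rewrite Rmult_assoc, Rinv_l; lra. }
  nra.
Qed.

Lemma hsub_line_norm (X : HilbertSpace) (x d : X) c :
  hnorm (hsub (hadd x (hscal c d)) x) = Rabs c * hnorm d.
Proof.
  unfold hnorm, hsub.
  repeat (rewrite ?inner_add_l, ?inner_add_r, ?inner_opp_l, ?inner_opp_r, ?inner_scal_l, ?inner_scal_r).
  rewrite (inner_sym _ d x).
  match goal with |- sqrt ?E = _ => replace E with (c * c * inner d d) by ring end.
  rewrite sqrt_mult by (nra || apply inner_pos). rewrite <- sqrt_Rsqr_abs. reflexivity.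
Qed.

Lemma descent (X : HilbertSpace) (f : X -> R) g L : frechet_gradient f g ->
  (forall y z : X, hnorm (hsub (g y) (g z)) <= L * hnorm (hsub y z)) -> L > 0 ->
  forall x d s, 0 < s ->
  f (hadd x (hscal s d)) <= f x + s * inner (g x) d + L / 2 * (s * s) * inner d d.
Proof.
  intros Hf HL HL0 x d s Hs.
  set (psi := fun t => f (hadd x (hscal t d)) - t * inner (g x) d - L / 2 * (t * t) * inner d d).
  assert (Hder : forall t, derivable_pt_lim psi t
     (inner (g (hadd x (hscal t d))) d - (1 * inner (g x) d) - L / 2 * (1 * t + t * 1) * inner d d)).
  { intro t. unfold psi. apply derivable_pt_lim_minus. apply derivable_pt_lim_minus.
    - apply (phi_deriv X f g Hf x d t).
    - apply derivable_pt_lim_scal_right with (f := id). apply derivable_pt_lim_id.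
    - apply derivable_pt_lim_scal_right with (f := fun t => L / 2 * (t * t)).
      apply derivable_pt_lim_scal. apply derivable_pt_lim_mult; apply derivable_pt_lim_id. }
  assert (pr : derivable psi) by (intro t; exists (inner (g (hadd x (hscal t d))) d - (1 * inner (g x) d) - L / 2 * (1 * t + t * 1) * inner d d); apply Hder).
  destruct (MVT_cor1 psi 0 s pr Hs) as [c [Hc Hcr]].
  rewrite (derive_pt_eq_0 psi c _ (pr c) (Hder c)) in Hc.
  assert (Hneg : inner (g (hadd x (hscal c d))) d - 1 * inner (g x) d - L / 2 * (1 * c + c * 1) * inner d d <= 0).
  { pose proof (cauchy_schwarz X (hsub (g (hadd x (hscal c d))) (g x)) d) as CS.
    unfold hsub at 1 in CS. rewrite inner_add_l, inner_opp_l in CS.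
    pose proof (HL (hadd x (hscal c d)) x) as L1. rewrite hsub_line_norm, Rabs_right in L1 by lra.
    rewrite <- hnorm_sq.
    pose proof (hnorm_nonneg X d). pose proof (hnorm_nonneg X (hsub (g (hadd x (hscal c d))) (g x))).
    nra. }
  assert (psi s <= psi 0) by nra.
  unfold psi in H. rewrite hscal_zero, hadd_zero in H. lra.
Qed.

Lemma mgn_nonneg (X : HilbertSpace) (g : X -> X) x n : 0 <= min_grad_norm g x n.
Proof. induction n; simpl. apply hnorm_nonneg. unfold Rmin; destruct Rle_dec; auto. apply hnorm_nonneg. Qed.

Lemma mgn_le (X : HilbertSpace) (g : X -> X) x n : min_grad_norm g x n <= hnorm (g (x n)).
Proof. destruct n; simpl. lra. apply Rmin_r. Qed.

Lemma mgn_mono (X : HilbertSpace) (g : X -> X) x N k : min_grad_norm g x (N + k) <= min_grad_norm g x N.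
Proof. induction k. rewrite Nat.add_0_r; lra. rewrite Nat.add_succ_r. simpl.
  pose proof (Rmin_l (min_grad_norm g x (N + k)) (hnorm (g (x (S (N + k)))))). lra. Qed.

Theorem theorem3 (X : HilbertSpace) (f : X -> R) (g : X -> X)
  (x0 : X) (alpha0 beta rho : R)
  (x d : nat -> X) (alpha : nat -> R) (l : nat -> nat) (nu : nat -> nat -> R)
  (L flow c1 c2 : R) :
  frechet_gradient f g ->
  0 < alpha0 -> 0 < beta < 1 -> 0 < rho < 1 ->
  algorithm1 f g x0 alpha0 beta rho x d alpha l nu ->
  (* A1 *)
  L > 0 -> (forall y z : X, hnorm (hsub (g y) (g z)) <= L * hnorm (hsub y z)) ->
  (* A2 *)
  (forall y : X, f y >= flow) ->
  (* A3 *)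
  c1 > 0 -> c2 > 0 ->
  (forall k, inner (g (x k)) (d k) <= - c1 * (hnorm (g (x k))) ^ 2) ->
  (forall k, hnorm (d k) <= c2 * hnorm (g (x k))) ->
  (* nu_k := nu_{k, l_k} -> 0 *)
  Un_cv (fun k => nu k (l k)) 0 ->
  ((exists kb, g (x kb) = hzero) \/
   (* liminf_k ||grad f(x_k)|| = 0 (the sequence is nonnegative) *)
   (forall eps, eps > 0 -> forall N, exists k, (N <= k)%nat /\ hnorm (g (x k)) < eps)) /\
  (* more precisely: lim_T min_{k=0..T-1} ||grad f(x_k)|| = 0 (index shifted by one) *)
  Un_cv (fun T => min_grad_norm g x T) 0.
Proof.
  intros Hf Ha0 Hb Hr Halg HL0 HL Hlow Hc1 Hc2 HA3a HA3b Hnucv.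
  destruct Halg as (Hx0 & Hal0 & Hneg & Hnu & Htest & Hfail & Hx & Hal).
  set (G := fun k => hnorm (g (x k))).
  set (t := fun k => alpha k * beta ^ l k).
  assert (Hpow : forall n, powerRZ beta (Z.of_nat n - 1) = beta ^ n * / beta).
  { intro n. replace (Z.of_nat n - 1)%Z with (Z.of_nat n + (-1))%Z by lia.
    rewrite powerRZ_add by lra. rewrite <- pow_powerRZ. simpl. rewrite Rmult_1_r. reflexivity. }
  assert (Halpos : forall k, 0 < alpha k).
  { induction k. rewrite Hal0; auto. rewrite Hal, Hpow.
    apply Rmult_lt_0_compat; auto. apply Rmult_lt_0_compat. apply pow_lt; lra. apply Rinv_0_lt_compat; lra. }
  assert (HalS : forall k, alpha (S k) = t k / beta).
  { intro k. rewrite Hal, Hpow. unfold t, Rdiv. ring. }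
  assert (Htpos : forall k, 0 < t k).
  { intro k. unfold t. apply Rmult_lt_0_compat; auto. apply pow_lt; lra. }
  assert (HGpos : forall k, 0 < G k).
  { intro k. unfold G. destruct (hnorm_nonneg X (g (x k))) as [H|H]; auto. exfalso.
    assert (E : g (x k) = hzero). { apply inner_def. rewrite <- hnorm_sq, <- H. ring. }
    specialize (Hneg k). rewrite E, inner_zero_l in Hneg. lra. }
  set (smin := 2 * (1 - rho) * c1 / (L * c2 ^ 2)).
  assert (Hsmin : 0 < smin).
  { unfold smin. apply Rdiv_lt_0_compat. nra. apply Rmult_lt_0_compat; auto. apply pow_lt; lra. }
  assert (Hbig : forall k j, l k = S j -> beta * smin <= t k).
  { intros k j Hj. set (s := alpha k * beta ^ j).
    assert (Hs : 0 < s) by (unfold s; apply Rmult_lt_0_compat; auto; apply pow_lt; lra).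
    assert (Hts : t k = s * beta) by (unfold t, s; rewrite Hj; simpl; ring).
    pose proof (Hfail k j ltac:(lia)) as F. fold s in F.
    pose proof (Hnu k j) as N0.
    pose proof (descent X f g L Hf HL HL0 (x k) (d k) s Hs) as D.
    set (ip := inner (g (x k)) (d k)) in *.
    assert (H1 : (1 - rho) * s * (- ip) < L / 2 * (s * s) * inner (d k) (d k)) by lra.
    pose proof (HA3a k) as A. fold ip in A. fold (G k) in A.
    pose proof (HA3b k) as Bd. fold (G k) in Bd.
    rewrite <- hnorm_sq in H1.
    pose proof (hnorm_nonneg X (d k)) as Dn. pose proof (HGpos k) as Gp.
    assert (Hdd : hnorm (d k) * hnorm (d k) <= c2 ^ 2 * G k ^ 2) by nra.
    assert (H2 : (1 - rho) * s * (c1 * G k ^ 2) < L / 2 * (s * s) * (c2 ^ 2 * G k ^ 2)).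
    { assert ((1 - rho) * s * (c1 * G k ^ 2) <= (1 - rho) * s * (- ip)).
      { apply Rmult_le_compat_l. nra. lra. }
      assert (L / 2 * (s * s) * (hnorm (d k) * hnorm (d k)) <= L / 2 * (s * s) * (c2 ^ 2 * G k ^ 2)).
      { apply Rmult_le_compat_l. nra. lra. }
      lra. }
    assert (Hp : 0 < s * G k ^ 2) by (apply Rmult_lt_0_compat; auto; apply pow_lt; lra).
    assert (H3 : (1 - rho) * c1 < L / 2 * s * c2 ^ 2).
    { apply (Rmult_lt_reg_r (s * G k ^ 2)); auto.
      replace ((1 - rho) * c1 * (s * G k ^ 2)) with ((1 - rho) * s * (c1 * G k ^ 2)) by ring.
      replace (L / 2 * s * c2 ^ 2 * (s * G k ^ 2)) with (L / 2 * (s * s) * (c2 ^ 2 * G k ^ 2)) by ring.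
      exact H2. }
    assert (smin <= s).
    { unfold smin. assert (0 < L * c2 ^ 2) by (apply Rmult_lt_0_compat; auto; apply pow_lt; lra).
      apply (Rmult_le_reg_r (L * c2 ^ 2)); auto. unfold Rdiv. rewrite Rmult_assoc, Rinv_l by lra. lra. }
    rewrite Hts. nra. }
  set (tmin := Rmin alpha0 (beta * smin)).
  assert (Htmin : 0 < tmin) by (unfold tmin; apply Rmin_glb_lt; nra).
  assert (Ht : forall k, tmin <= t k).
  { induction k.
    - destruct (l 0%nat) eqn:E.
      + unfold t. rewrite E, Hal0. simpl. unfold tmin. pose proof (Rmin_l alpha0 (beta * smin)). lra.
      + pose proof (Hbig 0%nat n E). unfold tmin. pose proof (Rmin_r alpha0 (beta * smin)). lra.
    - destruct (l (S k)) eqn:E.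
      + unfold t. rewrite E, HalS. simpl.
        assert (t k <= t k / beta).
        { unfold Rdiv. pose proof (Htpos k). assert (1 <= / beta).
          { rewrite <- Rinv_1. apply Rinv_le_contravar; lra. } nra. }
        lra.
      + pose proof (Hbig (S k) n E). unfold tmin. pose proof (Rmin_r alpha0 (beta * smin)). lra. }
  assert (Hdec : forall k, f (x (S k)) <= f (x k) - rho * c1 * tmin * G k ^ 2 + nu k (l k)).
  { intro k. rewrite Hx. pose proof (Htest k) as T. fold (t k) in T.
    pose proof (HA3a k) as A. fold (G k) in A.
    assert (rho * t k * inner (g (x k)) (d k) <= - (rho * c1 * tmin * G k ^ 2)).
    { pose proof (Ht k). assert (0 <= c1 * G k ^ 2) by (pose proof (HGpos k); nra).
      assert (rho * t k * inner (g (x k)) (d k) <= rho * t k * (- c1 * G k ^ 2)).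
      { apply Rmult_le_compat_l. pose proof (Htpos k); nra. exact A. }
      assert (0 <= rho * ((t k - tmin) * (c1 * G k ^ 2))).
      { apply Rmult_le_pos. lra. apply Rmult_le_pos; lra. }
      nra. }
    fold (t k). lra. }
  assert (Hcontra : forall N eps, eps > 0 -> (forall k, (N <= k)%nat -> G k >= eps) -> False).
  { intros N eps Heps HG.
    set (c := rho * c1 * tmin * eps ^ 2).
    assert (Hc : 0 < c) by (unfold c; apply Rmult_lt_0_compat; [apply Rmult_lt_0_compat; [apply Rmult_lt_0_compat|]; lra | apply pow_lt; lra]).
    destruct (Hnucv (c / 2) ltac:(lra)) as [N1 HN1].
    set (N2 := Nat.max N N1).
    assert (Hj : forall j, f (x (N2 + j)%nat) <= f (x N2) - INR j * (c / 2)).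
    { induction j. rewrite Nat.add_0_r. simpl. lra.
      rewrite Nat.add_succ_r, S_INR.
      pose proof (Hdec (N2 + j)%nat).
      assert (Hge : (N <= N2 + j)%nat) by lia.
      pose proof (HG _ Hge) as Gge.
      assert (eps ^ 2 <= G (N2 + j)%nat ^ 2) by (simpl; nra).
      assert (c <= rho * c1 * tmin * G (N2 + j)%nat ^ 2).
      { unfold c. apply Rmult_le_compat_l; [|lra]. left; apply Rmult_lt_0_compat; [apply Rmult_lt_0_compat|]; lra. }
      specialize (HN1 (N2 + j)%nat ltac:(lia)). unfold R_dist in HN1. rewrite Rminus_0_r in HN1.
      apply Rabs_def2 in HN1. lra. }
    destruct (INR_archimed (c / 2) (f (x N2) - flow) ltac:(lra)) as [j Hj'].
    specialize (Hj j). specialize (Hlow (x (N2 + j)%nat)). lra. }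
  split.
  - right. intros eps Heps N. apply NNPP. intro H. apply (Hcontra N eps Heps).
    intros k Hk. destruct (Rlt_or_le (G k) eps) as [H1|H1]; [|lra].
    exfalso. apply H. exists k. split; auto.
  - intros eps Heps.
    assert (HN : exists N, min_grad_norm g x N < eps).
    { apply NNPP. intro H. apply (Hcontra 0%nat eps Heps). intros k _.
      destruct (Rlt_or_le (min_grad_norm g x k) eps) as [H1|H1].
      - exfalso; apply H; exists k; auto.
      - pose proof (mgn_le X g x k). unfold G. lra. }
    destruct HN as [N HN]. exists N. intros n Hn. unfold R_dist. rewrite Rminus_0_r.
    rewrite Rabs_right by (apply Rle_ge, mgn_nonneg).
    replace n with (N + (n - N))%nat by lia. pose proof (mgn_mono X g x N (n - N)). lra.
Qed.
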